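(* For all $R\in(R_1,R_\infty)$, $\check H_c(R)$ is the unique zero of the derivative $\check x_R'$ in $\overline{\mathcal H_0(R)}$. It is a simple zero if $R\ne R_c$, and a double zero if $R=R_c$.
   Context: Let $R_1=\sqrt3$, $R_c=\sqrt7$, $R_\infty=\frac{1+3\sqrt3}2$. For $R\in(R_1,R_c]$ set $\check H_c(R)=\frac{R^2-3}2$ and $\check U_R(H)=\frac{(3-10R^2+3R^4)+(1-R^4)H-2(1-R^2)H^2-H^3}{R^2(3-R^2)^2(4-3R+R^3)^2}H$. For $R\in[R_c,R_\infty)$ set $\check H_c(R)=\frac{5+4R-R^2-\sqrt{3(5-R)(1+R)(R^2-7)}}{13+2R-2R^2}$ and $\check U_R(H)=-\frac{(13+2R-2R^2)^2H}{256(5-R)^2(4+R)^2(7-R+R^2)^2}\big(8(1+R)(5-R)(19-10R-2R^2-3(1-2R)H)+12(1-2R)(13+2R-2R^2)H^2+(13+2R-2R^2)^2H^3\big)$. ($\check H_c(R)$ is the smallest positive zero of $\check U_R'$.) Let $\check x_R(H)=\check U_R(H)/\check U_R(\check H_c(R))$, a polynomial in $H$. Let $\mathcal H_0(R)$ be the connected component of $\check x_R^{-1}(\mathbb D)$ containing $0$, where $\mathbb D$ is the open unit disk, and $\overline{\mathcal H_0(R)}$ its closure; it is known that $\check x_R$ is a conformal bijection from $\mathcal H_0(R)$ onto $\mathbb D$ extending to a homeomorphism $\overline{\mathcal H_0(R)}\to\overline{\mathbb D}$. *)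

(* Defs.v *)
From HB Require Import structures.
From mathcomp Require Import all_boot all_order all_algebra.
From mathcomp Require Import all_classical all_reals all_analysis.
From mathcomp Require Import complex.
Set Implicit Arguments. Unset Strict Implicit. Unset Printing Implicit Defensive.
Import Order.TTheory GRing.Theory Num.Theory.
Import numFieldNormedType.Exports.
Local Open Scope ring_scope.
Local Open Scope classical_set_scope.

(* The complex numbers over a real type R, viewed as a numClosedFieldType so
   that MathComp-Analysis equips them with the topology induced by the
   modulus (the usual topology of the complex plane). *)
Definition Cplx (R : realType) : numClosedFieldType := (R[i])%C.

Section Defs.
Variable R : realType.

Definition R_1 : R := Num.sqrt 3.
Definition R_c : R := Num.sqrt 7.
Definition R_inf : R := (1 + 3 * Num.sqrt 3) / 2.

Definition Hc (r : R) : R :=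
  if r <= R_c then (r ^+ 2 - 3) / 2
  else (5 + 4 * r - r ^+ 2
        - Num.sqrt (3 * (5 - r) * (1 + r) * (r ^+ 2 - 7)))
       / (13 + 2 * r - 2 * r ^+ 2).

Definition UR (r : R) : {poly R} :=
  if r <= R_c then
    ((r ^+ 2 * (3 - r ^+ 2) ^+ 2 * (4 - 3 * r + r ^+ 3) ^+ 2)^-1) *:
      (((3 - 10 * r ^+ 2 + 3 * r ^+ 4)%:P + (1 - r ^+ 4) *: 'X
        - (2 * (1 - r ^+ 2)) *: 'X ^+ 2 - 'X ^+ 3) * 'X)
  else
    let a := 13 + 2 * r - 2 * r ^+ 2 in
    (- (a ^+ 2 / (256 * (5 - r) ^+ 2 * (4 + r) ^+ 2
                   * (7 - r + r ^+ 2) ^+ 2))) *: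
      ('X * ((8 * (1 + r) * (5 - r)) *:
                ((19 - 10 * r - 2 * r ^+ 2)%:P - (3 * (1 - 2 * r)) *: 'X)
             + (12 * (1 - 2 * r) * a) *: 'X ^+ 2
             + (a ^+ 2) *: 'X ^+ 3)).

Definition xR (r : R) : {poly R} := ((UR r).[Hc r])^-1 *: UR r.

Definition xC (r : R) : {poly Cplx R} := map_poly (real_complex R) (xR r).

Definition H0 (r : R) : set (Cplx R) :=
  connected_component [set z : Cplx R | `|(xC r).[z]| < 1] 0.

End Defs.

Arguments R_1 {R}.
Arguments R_c {R}.
Arguments R_inf {R}.

(* Main.v *)
Require Import Defs.
From HB Require Import structures.
From mathcomp Require Import all_boot all_order all_algebra.
From mathcomp Require Import all_classical all_reals all_analysis.
From mathcomp Require Import complex.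
From mathcomp Require Import ring lra.
Import Order.TTheory GRing.Theory Num.Theory.
Import numFieldNormedType.Exports.
Local Open Scope ring_scope.
Local Open Scope classical_set_scope.
Local Open Scope complex_scope.

Notation cRe := (@complex.Re _).
Notation cIm := (@complex.Im _).

Section Gen.
Variable R : realType.

Lemma ltc_pos (e : Cplx R) : 0 < e -> cIm e = 0 /\ 0 < cRe e.
Proof. by rewrite ltcE /= => /andP[/eqP -> ->]. Qed.

Lemma normC_real (x : R) : `|x%:C| = (`|x|)%:C :> Cplx R.
Proof. by rewrite normc_def /= expr0n /= addr0 sqrtr_sqr. Qed.

Lemma real_cont : continuous (real_complex R : R -> Cplx R).
Proof.
move=> x; apply/cvgrPdist_lt => e e0.
have [eI eR] := @ltc_pos e e0.
apply/nbhs_ballP; exists (cRe e) => // y /=.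
rewrite /ball /= => Hy.
rewrite -rmorphB normC_real ltcE /= eI eqxx /=.
exact: Hy.
Qed.


Definition Phir (s p w : R) : R := 3 * w^+4 - 4 * s * w^+3 + 6 * p * w^+2.
Definition Phic (s p : R) (w : Cplx R) : Cplx R :=
  3 * w^+4 - 4 * s%:C * w^+3 + 6 * p%:C * w^+2.
Definition NN (h s p : R) : R := 3 * h^+4 + 4 * s * h^+3 + 6 * p * h^+2.
Definition psi (h : R) (z : Cplx R) : R := Num.sqrt 3 * (cRe z - h) + `|cIm z|.

Lemma Phic_real s p w : Phic s p w%:C = (Phir s p w)%:C.
Proof. rewrite /Phic /Phir; ring. Qed.

Lemma RePhic s p a b : cRe (Phic s p (a +i* b)) =
  3 * (a^+4 - 6 * a^+2 * b^+2 + b^+4) - 4 * s * (a^+3 - 3 * a * b^+2) + 6 * p * (a^+2 - b^+2).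
Proof. rewrite /Phic !exprS !expr0 /=. simpc. ring. Qed.

Lemma not_lt1 (u : Cplx R) : 1 <= cRe u -> ~ (`|u| < 1).
Proof.
move=> H; rewrite normc_def ltcE /= => /andP[_].
move=> Hs.
have H1 : 1 <= cRe u ^+ 2 + cIm u ^+ 2 by nra.
have := ler_wsqrtr H1; rewrite sqrtr1; lra.
Qed.

Lemma sqrt3_gt0 : 0 < Num.sqrt 3 :> R.
Proof. by rewrite sqrtr_gt0. Qed.

Lemma crit_real (s p a y : R) : 0 <= s -> 0 <= p ->
  Num.sqrt 3 * a + `|y| <= 0 ->
  a * a - y * y - s * a + p = 0 -> a * y + y * a - s * y = 0 -> a = 0 /\ y = 0.
Proof.
move=> s0 p0 Hp HRe HIm.
have s3 := sqrt3_gt0.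
have Hy : y * (2 * a - s) = 0 by rewrite -HIm; ring.
move/eqP: Hy; rewrite mulf_eq0 => /orP[/eqP y0|/eqP Ha].
  move: HRe Hp; rewrite y0 normr0 addr0 => HRe Hp.
  have a0 : a <= 0 by rewrite -(pmulr_rle0 _ s3).
  have H2 : s * a <= 0 by rewrite mulr_ge0_le0.
  have H1 : 0 <= a ^+ 2 by rewrite sqr_ge0.
  have E : a ^+ 2 = s * a - p by rewrite -[a ^+ 2]subr0 -HRe; ring.
  have Ha2 : a ^+ 2 <= 0 by lra.
  have : a ^+ 2 == 0 by rewrite eq_le Ha2 sqr_ge0.
  by rewrite sqrf_eq0 => /eqP.
have a0 : 0 <= a by lra.
have t1 : 0 <= Num.sqrt 3 * a by rewrite mulr_ge0 // ltW.
have t2 : 0 <= `|y| by [].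
have ya : Num.sqrt 3 * a = 0 /\ `|y| = 0 by split; lra.
case: ya => /eqP; rewrite mulf_eq0 gt_eqF //= => /eqP -> /eqP.
by rewrite normr_eq0 => /eqP.
Qed.

Variables (h s p : R) (f : {poly Cplx R}).
Hypothesis h0 : 0 < h.
Hypothesis s0 : 0 <= s.
Hypothesis p0 : 0 <= p.
Hypothesis hf : forall z, f.[z] = 1 - ((NN h s p)^-1)%:C * Phic s p (z - h%:C).

Lemma NN_gt0 : 0 < NN h s p.
Proof.
rewrite /NN.
have h2 : 0 < h^+2 by rewrite exprn_gt0.
have h3 : 0 < h^+3 by rewrite exprn_gt0.
have h4 : 0 < h^+4 by rewrite exprn_gt0.
have : 0 <= s * h^+3 by rewrite mulr_ge0 // ltW.
have : 0 <= p * h^+2 by rewrite mulr_ge0 // ltW.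
lra.
Qed.

Lemma f_real (t : R) : f.[t%:C] = (1 - (NN h s p)^-1 * Phir s p (t - h))%:C.
Proof. by rewrite hf -rmorphB Phic_real -rmorphM -rmorphB. Qed.

Lemma seg_val (t : R) : 0 <= t < h ->
  0 <= 1 - (NN h s p)^-1 * Phir s p (t - h) < 1.
Proof.
case/andP => t0 th.
set u := h - t.
have u0 : 0 < u by rewrite subr_gt0.
have uh : u <= h by rewrite /u lerBlDr lerDl.
have -> : t - h = - u by rewrite /u opprB.
have NP := NN_gt0.
have Pe : Phir s p (- u) = 3 * u^+4 + 4 * s * u^+3 + 6 * p * u^+2.
  by rewrite /Phir; ring.
rewrite Pe.
have u2 : u^+2 <= h^+2 by rewrite lerXn2r // ?nnegrE ltW.
have u3 : u^+3 <= h^+3 by rewrite lerXn2r // ?nnegrE ltW.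
have u4 : u^+4 <= h^+4 by rewrite lerXn2r // ?nnegrE ltW.
have u4p : 0 < u^+4 by rewrite exprn_gt0.
have a1 : s * u^+3 <= s * h^+3 by rewrite ler_wpM2l.
have a2 : p * u^+2 <= p * h^+2 by rewrite ler_wpM2l.
have b1 : 0 <= s * u^+3 by rewrite mulr_ge0 // exprn_ge0 // ltW.
have b2 : 0 <= p * u^+2 by rewrite mulr_ge0 // exprn_ge0 // ltW.
set Q := 3 * u^+4 + 4 * s * u^+3 + 6 * p * u^+2.
have Q0 : 0 < Q by rewrite /Q; lra.
have QN : Q <= NN h s p by rewrite /Q /NN; lra.
apply/andP; split.
  rewrite subr_ge0 ler_pdivrMl // mulr1 //.
rewrite ltrBlDr ltrDl mulr_gt0 // invr_gt0 //.
Qed.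

Definition Sx := [set z : Cplx R | `|f.[z]| < 1].

Lemma seg_in (t : R) : 0 <= t < h -> Sx t%:C.
Proof.
move=> Ht; rewrite /Sx /= f_real normC_real ltcE /=.
have /andP[a b] := seg_val t Ht.
by rewrite eqxx /= ger0_norm.
Qed.

Lemma seg_H0 (t : R) : 0 <= t < h -> connected_component Sx 0 t%:C.
Proof.
move=> /andP[t0 th].
have sub : [set (x%:C : Cplx R) | x in `[0, t]] `<=` connected_component Sx 0.
  apply: connected_component_max.
  - by exists 0 => //; rewrite /= in_itv /= lexx t0.
  - move=> _ [y + <-]; rewrite /= in_itv /= => /andP[y0 yt].
    apply: seg_in; rewrite y0 /=; exact: le_lt_trans yt th.
  - apply: connected_continuous_connected; first exact: segment_connected.
    apply: continuous_subspaceT; exact: real_cont.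
by apply: sub; exists t => //; rewrite /= in_itv /= lexx t0.
Qed.

Lemma closure_h : closure (connected_component Sx 0) h%:C.
Proof.
move=> B /nbhs_ballP [e e0 Hb].
have [eI eR] := @ltc_pos e e0.
set t := Num.max 0 (h - cRe e / 2).
have t0 : 0 <= t by rewrite /t le_max lexx.
have th : t < h by rewrite /t gt_max h0 /=; lra.
have ht : h - cRe e / 2 <= t by rewrite /t le_max lexx orbT.
exists t%:C; split; first by apply: seg_H0; rewrite t0 th.
apply: Hb; rewrite /ball /= -rmorphB normC_real ltcE /= eI eqxx /=.
rewrite ger0_norm; [lra | lra].
Qed.


Lemma abs_le_sqrt (a b : R) : `|a| <= Num.sqrt (a^+2 + b^+2).
Proof.
rewrite -sqrtr_sqr; apply: ler_wsqrtr.
have : 0 <= b^+2 by rewrite sqr_ge0. lra.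
Qed.

Lemma psi_lip (z y : Cplx R) (d : R) : `|z - y| < d%:C ->
  psi h z - (Num.sqrt 3 + 1) * d < psi h y.
Proof.
case: z => a b; case: y => c e.
rewrite normc_def ltcE /= => /andP[_ Hd0].
have Hd : Num.sqrt ((a - c)^+2 + (b - e)^+2) < d := Hd0.
rewrite /psi /=.
have h1 := abs_le_sqrt (a - c) (b - e).
have h2 : `|b - e| <= Num.sqrt ((a - c)^+2 + (b - e)^+2).
  by rewrite [_ + (b - e)^+2]addrC; apply: abs_le_sqrt.
have Ha : `|a - c| < d by exact: le_lt_trans h1 Hd.
have Hb : `|b - e| < d by exact: le_lt_trans h2 Hd.
have s3 := sqrt3_gt0.
have t1 : `|b| <= `|e| + `|b - e|.
  by have := ler_normD e (b - e); rewrite addrC subrK addrC.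
have t2 : Num.sqrt 3 * (a - c) <= Num.sqrt 3 * `|a - c|.
  by apply: ler_wpM2l; [exact: ltW | exact: ler_norm].
have t3 : Num.sqrt 3 * `|a - c| < Num.sqrt 3 * d by rewrite ltr_pM2l.
have : Num.sqrt 3 * (a - h) - Num.sqrt 3 * (c - h) = Num.sqrt 3 * (a - c) by ring.
lra.
Qed.

Lemma cl_neg (z : Cplx R) : closure [set y | psi h y < 0] z -> psi h z <= 0.
Proof.
move=> Hz; rewrite leNgt; apply/negP => pz.
set d := psi h z / (Num.sqrt 3 + 1).
have s3 := sqrt3_gt0.
have d0 : 0 < d by rewrite divr_gt0 //; lra.
have e0 : 0 < d%:C :> Cplx R by rewrite ltcR.
have [y [Ay By]] := Hz _ (nbhsx_ballx z _ e0).
have By2 : `|z - y| < d%:C := By.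
have := psi_lip _ _ _ By2; rewrite /= in Ay.
have -> : (Num.sqrt 3 + 1) * d = psi h z by rewrite /d; field; lra.
lra.
Qed.

Lemma cl_pos (z : Cplx R) : closure [set y | 0 < psi h y] z -> 0 <= psi h z.
Proof.
move=> Hz; rewrite leNgt; apply/negP => pz.
set d := - psi h z / (Num.sqrt 3 + 1).
have s3 := sqrt3_gt0.
have d0 : 0 < d by rewrite divr_gt0 //; lra.
have e0 : 0 < d%:C :> Cplx R by rewrite ltcR.
have [y [Ay By]] := Hz _ (nbhsx_ballx z _ e0).
have By2 : `|z - y| < d%:C := By.
have By' : `|y - z| < d%:C by rewrite distrC.
have := psi_lip _ _ _ By'; rewrite /= in Ay.
have -> : (Num.sqrt 3 + 1) * d = - psi h z by rewrite /d; field; lra.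
lra.
Qed.

Lemma Re_f (z : Cplx R) :
  cRe f.[z] = 1 - (NN h s p)^-1 * cRe (Phic s p (z - h%:C)).
Proof. by rewrite hf; case: (Phic s p _) => u v; simpc. Qed.

Lemma subhC (x y : R) : (x +i* y) - h%:C = (x - h) +i* y :> Cplx R.
Proof. by apply/eqP; rewrite eq_complex /= oppr0 addr0 !eqxx. Qed.

Lemma psi0_notS (z : Cplx R) : psi h z = 0 -> ~ Sx z.
Proof.
case: z => x y; rewrite /psi /= => H.
set a := x - h.
have s3 := sqrt3_gt0.
have s33 : Num.sqrt 3 ^+ 2 = 3 :> R by rewrite sqr_sqrtr.
have ya : y ^+ 2 = 3 * a ^+ 2.
  have : `|y| = - (Num.sqrt 3 * a) by rewrite /a; lra.
  move=> /(congr1 (fun t => t ^+ 2)); rewrite real_normK ?num_real // => ->.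
  by rewrite sqrrN exprMn s33.
have a0 : a <= 0.
  have : 0 <= `|y| by []. have : 0 <= Num.sqrt 3 * (- a) -> 0 <= - a.
    by rewrite pmulr_rge0.
  rewrite /a; nra.
rewrite /Sx /=; apply: not_lt1; rewrite Re_f subhC -/a RePhic.
have NP := NN_gt0.
have y4 : y ^+ 4 = (y ^+ 2) ^+ 2 by rewrite -exprM.
have E : 3 * (a ^+ 4 - 6 * a ^+ 2 * y ^+ 2 + y ^+ 4) -
   4 * s * (a ^+ 3 - 3 * a * y ^+ 2) + 6 * p * (a ^+ 2 - y ^+ 2)
   = - 24 * a ^+ 4 + 32 * (s * a ^+ 3) - 12 * (p * a ^+ 2).
  rewrite y4 ya; ring.
rewrite E.
set Q := (- 24 * a ^+ 4 + _ - _).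
have Q0 : Q <= 0.
  rewrite /Q.
  have : 0 <= a ^+ 4 by rewrite exprn_even_ge0.
  have : a ^+ 3 <= 0 by rewrite exprS mulr_le0_ge0 // sqr_ge0.
  have : 0 <= a ^+ 2 by rewrite sqr_ge0.
  move=> H2 H3 H4.
  have : s * a ^+ 3 <= 0 by rewrite mulr_ge0_le0.
  have : 0 <= p * a ^+ 2 by rewrite mulr_ge0.
  lra.
have : (NN h s p)^-1 * Q <= 0 by rewrite pmulr_rle0 ?invr_gt0.
lra.
Qed.

Lemma S0 : Sx 0.
Proof. have := seg_in 0; rewrite lexx h0 => /(_ isT); exact. Qed.

Lemma H0_neg (z : Cplx R) : connected_component Sx 0 z -> psi h z < 0.
Proof.
have sep : separated [set y | psi h y < 0] [set y | 0 < psi h y].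
  split; apply/seteqP; split => // y [].
    by move=> /cl_neg H1 /= H2; lra.
  by move=> /= H1 /cl_pos H2; lra.
have cover : connected_component Sx 0 `<=`
    [set y | psi h y < 0] `|` [set y | 0 < psi h y].
  move=> y /connected_component_sub Sy.
  have [H|H|H] := ltgtP (psi h y) 0.
  - by left.
  - by right.
  - by exfalso; exact: (psi0_notS _ H Sy).
have [HA|HB] := connected_subset sep cover (@component_connected _ Sx 0).
  by move=> Hz; exact: HA.
exfalso.
have := HB _ (connected_component_refl S0).
rewrite /= /psi /= normr0 addr0.
have s3 := sqrt3_gt0.
have : 0 < Num.sqrt 3 * h by rewrite mulr_gt0.
lra.
Qed.

Lemma closure_neg (z : Cplx R) :
  closure (connected_component Sx 0) z -> psi h z <= 0.
Proof.
move=> Hz; apply: cl_neg; apply: (closureS _ Hz).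
by move=> y /H0_neg.
Qed.

Lemma crit (z : Cplx R) : psi h z <= 0 ->
  (z - h%:C) * ((z - h%:C)^+2 - s%:C * (z - h%:C) + p%:C) = 0 -> z = h%:C.
Proof.
move=> Hp /eqP; rewrite mulf_eq0 => /orP[/eqP|/eqP]; first by move/eqP; rewrite subr_eq0 => /eqP.
move: Hp; case: z => x y; rewrite /psi /= subhC => Hp HQ.
have HRe := congr1 cRe HQ; have HIm := congr1 cIm HQ.
move: HRe HIm; rewrite !exprS !expr0 /=; simpc => HRe HIm.
have [a0 y0] := crit_real _ _ _ _ s0 p0 Hp HRe HIm.
apply/eqP; rewrite eq_complex /= y0 eqxx andbT.
by rewrite -subr_eq0 a0.
Qed.

End Gen.
Arguments NN {R}.
Arguments Phic {R}.
Arguments Phir {R}.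
Arguments psi {R}.
Arguments Sx {R}.


Definition Q12 {F : comNzRingType} (h s p : F) : {poly F} :=
  3%:P * 'X^4 - (12 * h + 4 * s)%:P * 'X^3 + (18 * h^+2 + 12 * s * h + 6 * p)%:P * 'X^2
  - (12 * (h^+3 + s*h^+2 + p*h))%:P * 'X.

Lemma Q12_hg {F : comNzRingType} (h s p : F) :
  (Q12 h s p).[h] = - (3 * h^+4 + 4 * s * h^+3 + 6 * p * h^+2).
Proof. rewrite /Q12 !(hornerD, hornerN, hornerM, hornerXn, hornerX, hornerC). ring. Qed.

Lemma Q12_deriv {F : comNzRingType} (h s p : F) : deriv (Q12 h s p) =
  12%:P * (('X - h%:P) * (('X - h%:P)^+2 - s%:P * ('X - h%:P) + p%:P)).
Proof.
rewrite /Q12 !(derivD, derivB, derivN, deriv_mulC, derivXn, derivX, derivC) /=.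
ring.
Qed.

Lemma Q12_eval {F : comNzRingType} (h s p z : F) : (Q12 h s p).[z] =
  3 * (z - h)^+4 - 4 * s * (z - h)^+3 + 6 * p * (z - h)^+2
  - (3 * h^+4 + 4 * s * h^+3 + 6 * p * h^+2).
Proof. rewrite /Q12 !(hornerD, hornerN, hornerM, hornerXn, hornerX, hornerC). ring. Qed.

Section P.
Variable R : realType.
Implicit Types (h s p : R).

Lemma caseA_poly (r : R) (k : R) :
  let h := (r^+2 - 3)/2 in
  k *: (((3 - 10 * r ^+ 2 + 3 * r ^+ 4)%:P + (1 - r ^+ 4) *: 'X
        - (2 * (1 - r ^+ 2)) *: 'X ^+ 2 - 'X ^+ 3) * 'X)
  = (- k / 3) *: Q12 h 3 ((7 - r^+2) * (r^+2 + 1) / 4).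
Proof.
move=> h; rewrite /Q12 /h.
apply/polyP => i.
rewrite !(coefZ, coefD, coefB, coefN, coefMX, coefCM, coefXn, coefX, coefC).
case: i => [|[|[|[|[|i]]]]] /=; by field.

Qed.

Lemma caseB_poly (r kap h : R) :
  let a := 13 + 2 * r - 2 * r ^+ 2 in
  let p := 5 + 4 * r - r ^+ 2 in
  let L := (2 * r ^+ 2 + 10 * r - 19) / a in
  let hp := 2 * p / a - h in
  a != 0 -> a * h ^+ 2 - 2 * p * h + 2 * p = 0 ->
  kap *: ('X * ((8 * (1 + r) * (5 - r)) *:
                ((19 - 10 * r - 2 * r ^+ 2)%:P - (3 * (1 - 2 * r)) *: 'X)
             + (12 * (1 - 2 * r) * a) *: 'X ^+ 2
             + (a ^+ 2) *: 'X ^+ 3))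
  = (kap * a ^+ 2 / 3) *: Q12 h (L + hp - 2 * h) ((L - h) * (hp - h)).
Proof.
move=> a p L hp a0 HG; rewrite /Q12 /hp /L.
rewrite /p /a in a0 HG *; clear L hp; clear a p.
apply/polyP => i.
rewrite !(coefZ, coefD, coefB, coefN, coefXM, coefMX, coefCM, coefXn, coefX, coefC).
case: i => [|[|[|[|[|i]]]]] /=.
- by field.
- apply/eqP; rewrite -subr_eq0; apply/eqP.
  transitivity (- 4 * kap * (2 * r ^+ 2 + 10 * r - 19) * ((13 + 2 * r - 2 * r ^+ 2) * h ^+ 2 - 2 * (5 + 4 * r - r ^+ 2) * h + 2 * (5 + 4 * r - r ^+ 2))).
    by field.
  by rewrite HG mulr0.
- apply/eqP; rewrite -subr_eq0; apply/eqP.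
  transitivity (2 * kap * (13 + 2 * r - 2 * r ^+ 2) * ((13 + 2 * r - 2 * r ^+ 2) * h ^+ 2 - 2 * (5 + 4 * r - r ^+ 2) * h + 2 * (5 + 4 * r - r ^+ 2))).
    by field.
  by rewrite HG mulr0.
- by field.
- by field.
- by field.
Qed.

Lemma sqrt_sq (x : R) : 0 <= x -> Num.sqrt x ^+ 2 = x.
Proof. by move=> x0; rewrite sqr_sqrtr. Qed.

Lemma paramsA (r : R) : R_1 < r -> r <= R_c -> exists s p K : R,
  [/\ 0 < Hc r, 0 <= s, 0 <= p & K != 0] /\
  [/\ UR r = K *: Q12 (Hc r) s p, (p == 0) = (r == R_c) & s != 0].
Proof.
rewrite /R_1 => r1 rc.
have t3 : Num.sqrt 3 ^+ 2 = 3 :> R by rewrite sqr_sqrtr.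
have t7 : Num.sqrt 7 ^+ 2 = 7 :> R by rewrite sqr_sqrtr.
have t30 : 0 <= Num.sqrt 3 :> R by exact: sqrtr_ge0.
have t70 : 0 <= Num.sqrt 7 :> R by exact: sqrtr_ge0.
have r0 : 0 < r by exact: le_lt_trans t30 r1.
have r3 : 3 < r ^+ 2 by nra.
have r7 : r ^+ 2 <= 7 by move: rc; rewrite /R_c => rc; nra.
set k := (r ^+ 2 * (3 - r ^+ 2) ^+ 2 * (4 - 3 * r + r ^+ 3) ^+ 2)^-1.
exists 3, ((7 - r^+2) * (r^+2 + 1) / 4), (- k / 3).
have -> : Hc r = (r^+2 - 3)/2 by rewrite /Hc rc.
split; split.
- lra.
- lra.
- apply: divr_ge0; last by [].
  apply: mulr_ge0; lra.
- have q1 : 0 < 4 - 3 * r + r ^+ 3.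
    have : 0 < r * (r ^+ 2 - 3) by rewrite mulr_gt0 // subr_gt0.
    have -> : r ^+ 3 = r * r ^+ 2 by rewrite exprS.
    lra.
  have q2 : 0 < (3 - r ^+ 2) ^+ 2.
    have -> : (3 - r ^+ 2) ^+ 2 = (r ^+ 2 - 3) ^+ 2 by ring.
    by rewrite exprn_gt0 // subr_gt0.
  have e1 : 0 < r ^+ 2 by rewrite exprn_gt0.
  have e3 : 0 < (4 - 3 * r + r ^+ 3) ^+ 2 by rewrite exprn_gt0.
  have k0 : 0 < k by rewrite /k invr_gt0; apply: mulr_gt0 => //; apply: mulr_gt0.
  have : - k / 3 < 0 by lra.
  by move/ltr0_neq0.
- by rewrite /UR rc; apply: caseA_poly.
- apply/idP/idP.
  + rewrite /R_c mulf_eq0 mulf_eq0 /= => /orP[/orP[]|] /eqP H; try lra.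
    apply/eqP; rewrite -(ger0_norm (ltW r0)) -sqrtr_sqr; congr Num.sqrt; lra.
  + move/eqP => ->; rewrite /R_c t7 subrr !mul0r //.
- by [].
Qed.

Lemma paramsB (r : R) : R_c < r -> r < R_inf -> exists s p K : R,
  [/\ 0 < Hc r, 0 <= s, 0 <= p & K != 0] /\
  [/\ UR r = K *: Q12 (Hc r) s p, (p == 0) = (r == R_c) & s != 0].
Proof.
rewrite /R_inf => rc ri.
have t3 : Num.sqrt 3 ^+ 2 = 3 :> R by rewrite sqr_sqrtr.
have t7 : Num.sqrt 7 ^+ 2 = 7 :> R by rewrite sqr_sqrtr.
have t30 : 0 <= Num.sqrt 3 :> R by exact: sqrtr_ge0.
have t70 : 0 <= Num.sqrt 7 :> R by exact: sqrtr_ge0.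
have r0 : 0 < r by exact: le_lt_trans t70 rc.
have r7 : 7 < r ^+ 2 by move: rc; rewrite /R_c => rc; nra.
have r2 : 2 < r by nra.
have t3l : Num.sqrt 3 < 3 :> R by nra.
have r5 : r < 5 by lra.
set a := 13 + 2 * r - 2 * r ^+ 2.
set p := 5 + 4 * r - r ^+ 2.
have a0 : 0 < a.
  have : 0 < ((1 + 3 * Num.sqrt 3) / 2 - r) * (r - (1 - 3 * Num.sqrt 3) / 2).
    by apply: mulr_gt0; lra.
  rewrite /a; nra.
have p0 : 0 < p.
  have -> : p = (5 - r) * (1 + r) by rewrite /p; ring.
  by apply: mulr_gt0; lra.
set D := 3 * (5 - r) * (1 + r) * (r ^+ 2 - 7).
have D0 : 0 < D by rewrite /D !mulr_gt0 //; lra.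
have DE : D = p ^+ 2 - 2 * p * a by rewrite /D /p /a; ring.
set sq := Num.sqrt D.
have sq0 : 0 < sq by rewrite sqrtr_gt0.
have sq2 : sq ^+ 2 = D by rewrite sqr_sqrtr // ltW.
have sqp : sq < p.
  have : sq ^+ 2 < p ^+ 2.
    rewrite sq2 DE; have : 0 < 2 * p * a by rewrite !mulr_gt0.
    lra.
  nra.
have Hh : Hc r = (p - sq) / a.
  by rewrite /Hc leNgt rc /= /sq /D /p /a.
set h := Hc r.
set L := (2 * r ^+ 2 + 10 * r - 19) / a.
set hp := 2 * p / a - h.
have HG : a * h ^+ 2 - 2 * p * h + 2 * p = 0.
  rewrite /h Hh.
  transitivity ((sq ^+ 2 - D) / a).
    rewrite DE; field; lra.
  by rewrite sq2 subrr mul0r.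
have Lh : 0 < L - h.
  have -> : L - h = (3 * (r - 2) * (r + 4) + sq) / a.
    rewrite /L /h Hh /p; field; lra.
  apply: divr_gt0 => //.
  have : 0 < 3 * (r - 2) * (r + 4) by rewrite !mulr_gt0 //; lra.
  lra.
have hph : 0 < hp - h.
  have -> : hp - h = 2 * sq / a.
    rewrite /hp /h Hh; field; lra.
  by rewrite divr_gt0 // mulr_gt0.
set kap := - (a ^+ 2 / (256 * (5 - r) ^+ 2 * (4 + r) ^+ 2 * (7 - r + r ^+ 2) ^+ 2)).
exists (L + hp - 2 * h), ((L - h) * (hp - h)), (kap * a ^+ 2 / 3).
have kap0 : kap < 0.
  rewrite /kap oppr_lt0; apply: divr_gt0; first by rewrite exprn_gt0.
  apply: mulr_gt0; first (apply: mulr_gt0; first apply: mulr_gt0).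
  - by [].
  - by rewrite exprn_gt0 //; lra.
  - by rewrite exprn_gt0 //; lra.
  - rewrite exprn_gt0 //; nra.
split; split.
- by rewrite -/h; move: Hh; rewrite -/h => ->; rewrite divr_gt0 // subr_gt0.
- lra.
- by rewrite mulr_ge0 // ltW.
- have : kap * a ^+ 2 / 3 < 0.
    have : 0 < a ^+ 2 by rewrite exprn_gt0.
    move=> H; have : kap * a ^+ 2 < 0 by rewrite nmulr_rlt0.
    lra.
  by move/ltr0_neq0.
- rewrite /UR leNgt rc /=.
  apply: (caseB_poly r kap h); first by rewrite gt_eqF.
  exact: HG.
- rewrite gt_eqF ?mulr_gt0 //.
  by apply/esym/negbTE; rewrite gt_eqF.
- by rewrite gt_eqF //; lra.
Qed.

Lemma params (r : R) : R_1 < r < R_inf -> exists s p K : R,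
  [/\ 0 < Hc r, 0 <= s, 0 <= p & K != 0] /\
  [/\ UR r = K *: Q12 (Hc r) s p, (p == 0) = (r == R_c) & s != 0].
Proof.
case/andP => r1 ri.
case: (lerP r R_c) => rc; first exact: paramsA.
exact: paramsB.
Qed.

Lemma xR_form (r h s p K : R) : 0 < h -> 0 <= s -> 0 <= p -> K != 0 ->
  h = Hc r -> UR r = K *: Q12 h s p ->
  xR r = (- (NN h s p)^-1) *: Q12 h s p.
Proof.
move=> h0 s0 p0 K0 hh HU.
have NP := @NN_gt0 R h s p h0 s0 p0.
rewrite /xR -hh HU hornerZ Q12_hg -/(NN h s p) scalerA; congr (_ *: _).
field; apply/andP; split => //; by rewrite gt_eqF.
Qed.

Lemma map_Q12 (h s p : R) :
  map_poly (real_complex R) (Q12 h s p) = Q12 h%:C s%:C p%:C.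
Proof.
apply/polyP => i.
rewrite coef_map /Q12 !(coefD, coefB, coefN, coefCM, coefXn, coefX) /=.
case: i => [|[|[|[|[|i]]]]] /=; ring.
Qed.

End P.

Theorem lemma13 (R : realType) (r : R) :
  R_1 < r < R_inf ->
  let Hcc : Cplx R := real_complex R (Hc r) in
  [/\ closure (H0 r) Hcc,
      (forall z : Cplx R, closure (H0 r) z -> root (xC r)^`() z -> z = Hcc),
      (r != R_c -> mup Hcc (xC r)^`() = 1%N) &
      (r = R_c -> mup Hcc (xC r)^`() = 2%N)].
Proof.
move=> Hr Hcc.
have [s [p [K [[h0 s0 p0 K0] [HU Hp Hs]]]]] := @params R r Hr.
rewrite /Hcc; move: h0 HU; set h := Hc r => h0 HU.
have HxR := @xR_form R r h s p K h0 s0 p0 K0 erefl HU.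
have NP := @NN_gt0 R h s p h0 s0 p0.
set k := NN h s p in NP HxR.
have k0 : k != 0 by rewrite gt_eqF.
have kC : (k%:C : Cplx R) != 0.
  apply/negP => /eqP H; move/negP: k0; apply; apply/eqP; apply: complexI; rewrite H //.
have ENN : 3 * h%:C ^+ 4 + 4 * s%:C * h%:C ^+ 3 + 6 * p%:C * h%:C ^+ 2 = k%:C :> Cplx R.
  by rewrite /k /NN; ring.
have hf : forall z, (xC r).[z] = 1 - (k^-1)%:C * Phic s p (z - h%:C).
  move=> z; rewrite /xC HxR map_polyZ map_Q12 hornerZ Q12_eval ENN /Phic.
  rewrite rmorphN fmorphV; field.
  exact: kC.
have HD : deriv (xC r) = (- 12 * (k^-1)%:C)%:P *
    (('X - h%:C%:P) * (('X - h%:C%:P)^+2 - s%:C%:P * ('X - h%:C%:P) + p%:C%:P)).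
  rewrite /xC HxR map_polyZ map_Q12 derivZ Q12_deriv -mul_polyC rmorphN.
  ring.
have cC : (- 12 * (k^-1)%:C : Cplx R) != 0.
  apply: mulf_neq0.
    by rewrite -[12]/(12%:R) -mulNrn mulrn_eq0 /= oppr_eq0 oner_eq0.
  by rewrite fmorphV invr_eq0.
split.
- exact: (@closure_h R h s p _ h0 s0 p0 hf).
- move=> z Hz; rewrite HD /root hornerM hornerC mulf_eq0 (negbTE cC) /=.
  rewrite !(hornerM, hornerD, hornerN, hornerX, hornerC, hornerXn, hornerM) => /eqP HQ.
  apply: (@crit R h s p s0 p0 z (@closure_neg R h s p _ h0 s0 p0 hf z Hz)).
  exact: HQ.
- move=> rc.
  have pC : (p%:C : Cplx R) != 0.
    have pn0 : p != 0 by rewrite Hp.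
    apply/negP => /eqP H; move/negP: pn0; apply; apply/eqP; apply: complexI; rewrite H //.
  rewrite HD mupMr; last by rewrite rootC.
  rewrite mupMl.
    by rewrite -[X in mup _ X]expr1 mup_XsubCX eqxx.
  rewrite /root !(hornerD, hornerN, hornerM, hornerX, hornerC, hornerXn) subrr.

  by rewrite mul0r mulr0 subr0 add0r.
- move=> rc.
  have pz : p = 0 by apply/eqP; rewrite Hp rc eqxx.
  have sC : (s%:C : Cplx R) != 0.
    apply/negP => /eqP H; move/negP: Hs; apply; apply/eqP; apply: complexI; rewrite H //.
  have E : ('X - h%:C%:P) * (('X - h%:C%:P)^+2 - s%:C%:P * ('X - h%:C%:P) + p%:C%:P)
     = ('X - h%:C%:P)^+2 * ('X - h%:C%:P - s%:C%:P) :> {poly Cplx R}.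
    by rewrite pz; ring.
  rewrite HD E mupMr; last by rewrite rootC.
  rewrite mupMl.
    by rewrite mup_XsubCX eqxx.
  rewrite /root !(hornerD, hornerN, hornerM, hornerX, hornerC) subrr add0r oppr_eq0.
  exact: sC.
Qed.
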